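(* Let $V$ be a vertex operator algebra and let $h\in V$ satisfy $L(n)h=\delta_{n,0}h$ and $h_nh=\delta_{n,1}\gamma\mathbf 1$ for all integers $n\ge0$, with $\gamma\in\mathbb Q$. Then, as operators on $V$ (formal power series in $z$), $$e^{z(L(1)-h(1))}e^{-zL(1)}=\exp\Big(\sum_{k=1}^{\infty}\frac{h(k)}{k}(-z)^{k}\Big),\qquad e^{z(L(-1)+h(-1))}e^{-zL(-1)}=\exp\Big(\sum_{k=1}^{\infty}\frac{h(-k)}{k}z^{k}\Big).$$
   Context: $Y(h,z)=\sum_{n\in\mathbb Z}h(n)z^{-n-1}$ and $Y(\omega,z)=\sum_{n\in\mathbb Z}L(n)z^{-n-2}$, where $\omega$ is the Virasoro element of $V$. *)

(* Defs.v *)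
(* Vertex operator algebras are not in any library: we define
   them here (Frenkel-Lepowsky-Meurman / Lepowsky-Li definition, with the
   Jacobi identity in its equivalent component (Borcherds) form). *)
From HB Require Import structures.
From mathcomp Require Import all_boot all_order all_algebra.
Set Implicit Arguments. Unset Strict Implicit. Unset Printing Implicit Defensive.
Import Order.TTheory GRing.Theory Num.Theory.
Local Open Scope ring_scope.

Section VOA.
Variable K : fieldType.
Variable V : lmodType K.

Definition binz (r : int) (i : nat) : K :=
  (\prod_(j < i) (r - j%:Z)%:~R) / (i`!)%:R.

(* Y : V -> int -> V -> V with  Y(u,z) = sum_n (Y u n) z^{-n-1},
   i.e. Y u n is the mode u_n. *)
Record is_VOA (Y : V -> int -> V -> V) (vac omega : V) (c : K) : Prop := {
  Y_linl : forall (a : K) u u' n w,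
      Y (a *: u + u') n w = a *: Y u n w + Y u' n w;
  Y_linr : forall u n (a : K) w w',
      Y u n (a *: w + w') = a *: Y u n w + Y u n w';
  Y_trunc : forall u v, exists N : int, forall n, N <= n -> Y u n v = 0;
  Y_vac : forall n v, Y vac n v = if n == (-1)%R then v else 0;
  Y_creation : forall u, (forall n : int, 0 <= n -> Y u n vac = 0)
                         /\ Y u (-1) vac = u;
  Y_borcherds : forall u v w (p q r : int), exists N : nat, forall M : nat,
      (N <= M)%N ->
      \sum_(i < M) binz p i *: Y (Y u (r + i%:Z) v) (p + q - i%:Z) w =
      \sum_(i < M) ((-1) ^+ i * binz r i) *:
          (Y u (p + r - i%:Z) (Y v (q + i%:Z) w)
           - (-1) ^+ `|r|%N *: Y v (q + r - i%:Z) (Y u (p + i%:Z) w));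
  (* L(n) := omega_{n+1} *)
  Y_virasoro : forall (m n : int) w,
      Y omega (m + 1) (Y omega (n + 1) w) - Y omega (n + 1) (Y omega (m + 1) w)
      = (m - n)%:~R *: Y omega (m + n + 1) w
        + (if m + n == 0 then ((m ^+ 3 - m)%:~R / 12%:R * c) *: w else 0);
  Y_Lm1 : forall u n w, Y (Y omega 0 u) n w = (- n)%:~R *: Y u (n - 1) w;
  Y_grading : forall v, exists s : seq (int * V),
      all (fun p => Y omega 1 p.2 == p.1%:~R *: p.2) s /\ v = \sum_(p <- s) p.2;
  Y_findim : forall n : int, exists s : seq V, forall v,
      Y omega 1 v = n%:~R *: v -> exists a : nat -> K,
        v = \sum_(i < size s) a i *: s`_i;
  Y_bounded : exists N : int, forall (n : int) v,
      n < N -> Y omega 1 v = n%:~R *: v -> v = 0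
}.

(* Formal power series in z with coefficients in operators V -> V:
   f is the series  sum_n (f n) z^n. *)
Definition fps := nat -> V -> V.
Definition fmul (f g : fps) : fps :=
  fun n v => \sum_(i < n.+1) f i (g (n - i)%N v).
Definition fone : fps := fun n v => if n == 0%N then v else 0.
Definition fpow (f : fps) (m : nat) : fps := iter m (fmul f) fone.
(* exponential of a series with zero constant term *)
Definition fexp (f : fps) : fps :=
  fun n v => \sum_(m < n.+1) ((m`!)%:R^-1 : K) *: fpow f m n v.
(* the series  z A *)
Definition zop (A : V -> V) : fps := fun n v => if n == 1%N then A v else 0.
End VOA.

(* Main.v *)
Require Import Defs.
From HB Require Import structures.
From mathcomp Require Import all_boot all_order all_algebra.
From mathcomp Require Import zify ring.
Set Implicit Arguments. Unset Strict Implicit. Unset Printing Implicit Defensive.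
Import Order.TTheory GRing.Theory Num.Theory.
Local Open Scope ring_scope.

Section Abstract.
Variable K : numFieldType.
Variable V : lmodType K.

Definition lin (f : V -> V) := forall (a : K) x y, f (a *: x + y) = a *: f x + f y.

Lemma lin0 f : lin f -> f 0 = 0.
Proof.
move=> hf; have E := hf 1 0 0; rewrite scale1r addr0 scale1r in E.
have := congr1 (fun x => x - f 0) E; rewrite /= subrr addrK => H; by rewrite -H.
Qed.
Lemma linZ f : lin f -> forall a x, f (a *: x) = a *: f x.
Proof. by move=> hf a x; have := hf a x 0; rewrite !addr0 lin0 // addr0. Qed.
Lemma linD f : lin f -> forall x y, f (x + y) = f x + f y.
Proof. by move=> hf x y; have := hf 1 x y; rewrite !scale1r. Qed.
Lemma linN f : lin f -> forall x, f (- x) = - f x.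
Proof. by move=> hf x; rewrite -scaleN1r linZ // scaleN1r. Qed.
Lemma linB f : lin f -> forall x y, f (x - y) = f x - f y.
Proof. by move=> hf x y; rewrite linD // linN. Qed.
Lemma lin_sum f : lin f -> forall (I : Type) (r : seq I) (P : pred I) (F : I -> V),
  f (\sum_(i <- r | P i) F i) = \sum_(i <- r | P i) f (F i).
Proof. move=> hf I r P F; exact: (big_morph f (linD hf) (lin0 hf)). Qed.
Lemma lin_add f g : lin f -> lin g -> lin (fun w => f w + g w).
Proof. by move=> hf hg a x y; rewrite hf hg scalerDr addrACA. Qed.
Lemma lin_opp f : lin f -> lin (fun w => - f w).
Proof. by move=> hf a x y; rewrite hf opprD scalerN. Qed.
Lemma lin_scale f b : lin f -> lin (fun w => b *: f w).
Proof. by move=> hf a x y; rewrite hf scalerDr !scalerA mulrC. Qed.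
Lemma lin_iter f n : lin f -> lin (iter n f).
Proof. move=> hf; elim: n => [|n IH] a x y //=; by rewrite IH hf. Qed.

Lemma fpowS (f : fps V) m : fpow f m.+1 = fmul f (fpow f m).
Proof. by []. Qed.

Lemma fmul_eq (f f' g g' : fps V) n v :
  (forall i w, f i w = f' i w) -> (forall i w, g i w = g' i w) ->
  fmul f g n v = fmul f' g' n v.
Proof. by move=> Hf Hg; rewrite /fmul; apply: eq_bigr => i _; rewrite Hg Hf. Qed.

Lemma lin_fmul (f g : fps V) n : (forall i, lin (f i)) -> (forall i, lin (g i)) ->
  lin (fmul f g n).
Proof.
move=> hf hg a x y; rewrite /fmul scaler_sumr -big_split; apply: eq_bigr => i _ /=.
by rewrite hg hf.
Qed.

Lemma fmulD (f g : fps V) n v : (forall i, lin (f i)) ->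
  (n.+1)%:R *: fmul f g n.+1 v =
  fmul (fun i w => (i.+1)%:R *: f i.+1 w) g n v
  + fmul f (fun i w => (i.+1)%:R *: g i.+1 w) n v.
Proof.
move=> hf; rewrite /fmul scaler_sumr.
transitivity (\sum_(i < n.+2) ((i%:R *: f i (g (n.+1 - i)%N v))
     + ((n.+1 - i)%N%:R *: f i (g (n.+1 - i)%N v)))).
  apply: eq_bigr => i _; rewrite -scalerDl -natrD subnKC //.
  by rewrite -ltnS ltn_ord.
rewrite big_split /=; congr (_ + _).
  rewrite big_ord_recl /= scale0r add0r; apply: eq_bigr => i _.
  by rewrite /bump leq0n add1n subSS.
rewrite big_ord_recr /= subnn scale0r addr0; apply: eq_bigr => i _ /=.
rewrite subSn; last by rewrite -ltnS ltn_ord.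
by rewrite linZ.
Qed.

Variables (T S : V -> V).
Hypothesis linT : lin T.
Hypothesis linS : lin S.

Lemma fmulT (f g : fps V) n v : (forall i, lin (f i)) ->
  T (fmul f g n v) - fmul f g n (T v) =
  fmul (fun i w => T (f i w) - f i (T w)) g n v
  + fmul f (fun i w => T (g i w) - g i (T w)) n v.
Proof.
move=> hf; rewrite /fmul (lin_sum linT) -sumrB -big_split; apply: eq_bigr => i _ /=.
by rewrite linB // addrA subrK.
Qed.

Definition psi (f : fps V) : fps V :=
  fun n v => (n.+1)%:R *: f n.+1 v - (T (f n v) - f n (T v)).

Lemma psi_fmul (f g : fps V) n v : (forall i, lin (f i)) ->
  psi (fmul f g) n v = fmul (psi f) g n v + fmul f (psi g) n v.
Proof.
move=> hf.
have -> : fmul (psi f) g n v = fmul (fun i w => (i.+1)%:R *: f i.+1 w) g n v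
   - fmul (fun i w => T (f i w) - f i (T w)) g n v.
  by rewrite /fmul -sumrB; apply: eq_bigr.
have -> : fmul f (psi g) n v = fmul f (fun i w => (i.+1)%:R *: g i.+1 w) n v
   - fmul f (fun i w => T (g i w) - g i (T w)) n v.
  by rewrite /fmul -sumrB; apply: eq_bigr => i _; rewrite linB.
by rewrite /psi fmulD // fmulT // opprD addrACA.
Qed.

Lemma psi_fone n v : psi (@fone K V) n v = 0.
Proof.
rewrite /psi /fone /= scaler0 sub0r.
rewrite /psi /fone /=.
by case: n => [|n] /=; rewrite ?subrr ?oppr0 // (lin0 linT) addr0 oppr0.
Qed.


Lemma fact_inv m : ((m.+1)`!%:R : K)^-1 * (m.+1)%:R = (m`!%:R)^-1.
Proof.
rewrite factS natrM invfM mulrAC mulVf ?mul1r //.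
by rewrite pnatr_eq0.
Qed.

Section Series.
Variable c : fps V.
Hypothesis linc : forall i, lin (c i).
Hypothesis c0 : forall w, c 0%N w = 0.
Hypothesis cS : forall i w, S (c i w) = c i (S w).
Hypothesis psic : forall n w, psi c n w = if n == 0%N then S w else 0.

Lemma fmul_psic (X : fps V) n v : fmul (psi c) X n v = S (X n v).
Proof.
rewrite /fmul big_ord_recl /= psic /= subn0 big1 ?addr0 // => i _.
Qed.

Lemma psi_pow m n v : psi (fpow c m) n v = m%:R *: S (fpow c m.-1 n v).
Proof.
elim: m n v => [|m IH] n v; first by rewrite scale0r; exact: psi_fone.
rewrite fpowS psi_fmul // fmul_psic.
have -> : fmul c (psi (fpow c m)) n v = m%:R *: S (fpow c m n v).
  case: m IH => [|m] IH.
    rewrite scale0r /fmul big1 // => i _.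
    by rewrite IH scale0r (lin0 (linc i)).
  rewrite fpowS /fmul (lin_sum linS) scaler_sumr; apply: eq_bigr => i _.
  by rewrite IH linZ // cS.
by rewrite /= -[m.+1]addn1 natrD scalerDl scale1r addrC.
Qed.

Lemma fpow_low m n v : (n < m)%N -> fpow c m n v = 0.
Proof.
elim: m n v => [//|m IH] n v Hn.
rewrite fpowS /fmul big1 // => -[[|i] Hi] _ /=; first by rewrite c0.
rewrite IH ?(lin0 (linc _)) //; lia.
Qed.

Lemma psi_fexp n v : psi (fexp c) n v = S (fexp c n v).
Proof.
have ext w : \sum_(m < n.+1) ((m`!)%:R^-1 : K) *: fpow c m n w
           = \sum_(m < n.+2) ((m`!)%:R^-1 : K) *: fpow c m n w.
  by rewrite [RHS]big_ord_recr (@fpow_low ord_max) // scaler0 /= addr0.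
rewrite /psi /fexp !ext.
transitivity (\sum_(m < n.+2) ((m`!)%:R^-1 : K) *: psi (fpow c m) n v).
  rewrite /psi (lin_sum linT) scaler_sumr -!sumrB; apply: eq_bigr => m _.
  by rewrite (linZ linT) !scalerBr !scalerA [_ * _]mulrC.
rewrite (lin_sum linS) big_ord_recl (psi_pow ord0) scale0r scaler0 add0r.
rewrite [RHS]big_ord_recr (@fpow_low ord_max) // scaler0 (lin0 linS) /= addr0.
apply: eq_bigr => m _; rewrite add0n -fpowS psi_pow /bump leq0n add1n /= scalerA fact_inv.
by rewrite (linZ linS).
Qed.

End Series.

Section Exp.
Variable A : V -> V.
Hypothesis linA : lin A.

Lemma fpow_zop m n v : fpow (zop A) m n v = if n == m then iter m A v else 0.
Proof.
elim: m n v => [|m IH] n v; first by [].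
rewrite fpowS /fmul; case: n => [|n].
  by rewrite big_ord_recl big_ord0 /= addr0.
rewrite big_ord_recl /= add0r big_ord_recl /= big1 ?addr0.
  rewrite IH eqSS /zop /bump /= addn0 subSS subn0; case: eqP => // _; exact: (lin0 linA).
by [].
Qed.

Lemma fexp_zop n v : fexp (zop A) n v = ((n`!)%:R^-1 : K) *: iter n A v.
Proof.
rewrite /fexp big_ord_recr /= big1 ?add0r; first by rewrite fpow_zop eqxx.
by move=> i _; rewrite fpow_zop (gtn_eqF (ltn_ord i)) scaler0.
Qed.

Lemma lin_E n : lin (fexp (zop A) n).
Proof.
move=> a x y; rewrite !fexp_zop (lin_iter n linA).
by rewrite scalerDr !scalerA mulrC.
Qed.

Lemma DE_l n v : (n.+1)%:R *: fexp (zop A) n.+1 v = A (fexp (zop A) n v).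
Proof.
by rewrite !fexp_zop scalerA mulrC fact_inv linZ.
Qed.

Lemma DE_r n v : (n.+1)%:R *: fexp (zop A) n.+1 v = fexp (zop A) n (A v).
Proof.
by rewrite !fexp_zop scalerA mulrC fact_inv iterSr.
Qed.
End Exp.


Lemma psi_P n v :
  let P := fmul (fexp (zop (fun w => T w + S w))) (fexp (zop (fun w => - T w))) in
  psi P n v = S (P n v).
Proof.
move=> P.
have linA := lin_add linT linS.
have linB := lin_opp linT.
set E1 := fexp (zop (fun w => T w + S w)).
set E2 := fexp (zop (fun w => - T w)).
have linP : lin (P n) by apply: lin_fmul => i; apply: lin_E.
have h1 : fmul (fun i w => i.+1%:R *: E1 i.+1 w) E2 n v = (fun w => T w + S w) (P n v).
  rewrite /P /fmul (lin_sum linA); apply: eq_bigr => i _; exact: DE_l.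
have h2 : fmul E1 (fun i w => i.+1%:R *: E2 i.+1 w) n v = P n (- T v).
  rewrite /P /fmul; apply: eq_bigr => i _; by rewrite DE_r.
rewrite /psi /P fmulD; last exact: lin_E.
rewrite -/E1 -/E2 h1 h2 -/(P) (linN linP) /=.
by rewrite opprB addrA subrK addrAC subrr add0r.
Qed.

Lemma uniq_sol (X Z : fps V) :
  (forall v, X 0%N v = v) -> (forall v, Z 0%N v = v) ->
  (forall n v, psi X n v = S (X n v)) -> (forall n v, psi Z n v = S (Z n v)) ->
  forall n v, X n v = Z n v.
Proof.
move=> X0 Z0 PX PZ; elim => [|n IH] v; first by rewrite X0 Z0.
have hX := PX n v; have hZ := PZ n v.
rewrite /psi in hX hZ.
move/eqP: hX; rewrite subr_eq => /eqP hX.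
move/eqP: hZ; rewrite subr_eq => /eqP hZ.
apply: (scalerI (a := (n.+1)%:R)); first by rewrite pnatr_eq0.
by rewrite hX hZ !IH.
Qed.

Theorem main_abs (c : fps V) :
  (forall i, lin (c i)) -> (forall w, c 0%N w = 0) ->
  (forall i w, S (c i w) = c i (S w)) ->
  (forall n w, psi c n w = if n == 0%N then S w else 0) ->
  forall n v,
  fmul (fexp (zop (fun w => T w + S w))) (fexp (zop (fun w => - T w))) n v
  = fexp c n v.
Proof.
move=> linc c0 cS psic; apply: uniq_sol.
- move=> v; rewrite /fmul big_ord_recl big_ord0 addr0 /=.
  rewrite (fexp_zop (lin_add linT linS)) (fexp_zop (lin_opp linT)) subn0 /=.
  by rewrite invr1 !scale1r.
- by move=> v; rewrite /fexp big_ord_recl big_ord0 addr0 /= invr1 scale1r.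
- by move=> n v; apply: psi_P.
- by move=> n v; apply: psi_fexp.
Qed.

End Abstract.
Section VOA.
Variable K : numFieldType.
Variable V : lmodType K.
Variables (Y : V -> int -> V -> V) (vac omega : V) (c : K).
Hypothesis HV : is_VOA Y vac omega c.
Variables (h : V) (gamma : rat).
Hypothesis hL : forall n : nat, Y omega (n%:Z + 1) h = if n == 0%N then h else 0.
Hypothesis hh : forall n : nat, Y h n%:Z h = if n == 1%N then ratr gamma *: vac else 0.

Lemma Ylin u n : lin (Y u n).
Proof. move=> a x y; exact: (Y_linr HV). Qed.
Lemma Yl0 n w : Y 0 n w = 0.
Proof.
have hl : lin (fun u => Y u n w) by move=> a x y; exact: (Y_linl HV).
exact: (lin0 hl).
Qed.

Lemma binz0 r : binz K r 0 = 1.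
Proof. by rewrite /binz big_ord0 fact0 divr1. Qed.
Lemma binz1 r : binz K r 1 = r%:~R.
Proof. by rewrite /binz big_ord1 divr1 subr0. Qed.
Lemma binz0S i : binz K 0 i.+1 = 0.
Proof. by rewrite /binz big_ord_recl subrr mul0r mul0r. Qed.

Lemma borch0 u v w p q : exists M : nat, (3 <= M)%N /\
  \sum_(i < M) binz K p i *: Y (Y u (0 + i%:Z) v) (p + q - i%:Z) w =
  Y u p (Y v q w) - Y v q (Y u p w).
Proof.
have [N HN] := Y_borcherds HV u v w p q 0.
exists N.+3; split => //.
rewrite HN; last by lia.
rewrite big_ord_recl big1 ?addr0.
  by rewrite /= expr0 binz0 mul1r !scale1r.
by move=> i _; rewrite binz0S mulr0 scale0r.
Qed.


Lemma omh k : (0 < k)%N -> Y omega k%:Z h = if k == 1%N then h else 0.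
Proof.
case: k => [//|k] _; have := hL k.
have -> : k%:Z + 1 = k.+1%:Z by rewrite -addn1 PoszD.
by move=> ->.
Qed.

Lemma comm_om p q w :
  Y omega p (Y h q w) - Y h q (Y omega p w) = (- q)%:~R *: Y h (p + q - 1) w.
Proof.
have [M [HM <-]] := borch0 omega h w p q.
case: M HM => [|[|[|M]]] // _.
rewrite big_ord_recl big_ord_recl big1 ?addr0.
  rewrite lift0 /=.
  rewrite add0r (omh (k := 1)) // binz0 binz1 (Y_Lm1 HV) scale1r -scalerDl -intrD.
  congr (_%:~R *: _); lia.
move=> i _; rewrite !lift0 add0r omh //= Yl0 scaler0 //.
Qed.


Lemma comm_hh p q w : p + q != 0 -> Y h p (Y h q w) = Y h q (Y h p w).
Proof.
move=> Hpq; apply/eqP; rewrite -subr_eq0; apply/eqP.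
have [M [_ <-]] := borch0 h h w p q.
apply: big1 => i _; rewrite add0r hh.
case: eqP => [Ei|_]; last by rewrite Yl0 scaler0.
have hl : lin (fun u => Y u (p + q - (nat_of_ord i)%:Z) w)
  by move=> a x y; exact: (Y_linl HV).
rewrite (linZ hl) (Y_vac HV) Ei.
case: eqP => [E|_]; last by rewrite !scaler0.
exfalso; move/negP: Hpq; apply; apply/eqP; lia.
Qed.

End VOA.
Unset Implicit Arguments.
Theorem lemma3p3 (K : numClosedFieldType) (V : lmodType K)
  (Y : V -> int -> V -> V) (vac omega : V) (c : K)
  (HV : is_VOA Y vac omega c)
  (h : V) (gamma : rat)
  (hL : forall n : nat, Y omega (n%:Z + 1) h = if n == 0%N then h else 0)
  (hh : forall n : nat, Y h n%:Z h = if n == 1%N then ratr gamma *: vac else 0) :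
  (forall (n : nat) (v : V),
     fmul (fexp (zop (fun w => Y omega 2 w - Y h 1 w)))
          (fexp (zop (fun w => - Y omega 2 w))) n v
     = fexp (fun k w => if k == 0%N then 0
                        else ((-1) ^+ k / k%:R : K) *: Y h k%:Z w) n v)
  /\
  (forall (n : nat) (v : V),
     fmul (fexp (zop (fun w => Y omega 0 w + Y h (-1) w)))
          (fexp (zop (fun w => - Y omega 0 w))) n v
     = fexp (fun k w => if k == 0%N then 0
                        else ((k%:R)^-1 : K) *: Y h (- k%:Z) w) n v).
Proof.
have YL := Ylin HV.
split.
- apply: (main_abs (T := Y omega 2) (S := fun w => - Y h 1 w)).
  + exact: YL.
  + exact: lin_opp.
  + move=> i a x y /=; case: (i == 0%N); first by rewrite scaler0 addr0.
    exact: lin_scale.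
  + by [].
  + move=> i w /=; case: eqP => [_|Hi]; first by rewrite (lin0 (YL _ _)) oppr0.
    rewrite (linN (YL _ _)) (linZ (YL _ _)) (comm_hh HV hh) //; last first.
    exact: (esym (scalerN _ _)).
  + move=> n w; rewrite /psi; case: n => [|n] /=.
      by rewrite (lin0 (YL _ _)) !subr0 scale1r expr1 divr1 scaleN1r.
    rewrite (linZ (YL _ _)) -(scalerBr ((-1)^+n.+1 / n.+1%:R) (Y omega 2 (Y h n.+1 w))) (comm_om HV hL).
    have -> : (2 + (n.+1)%:Z - 1) = (n.+2)%:Z by lia.
    rewrite !scalerA; apply/eqP; rewrite subr_eq0; apply/eqP; congr (_ *: _).
    rewrite !exprS; field.
    by rewrite nat1r -natrD !pnatr_eq0.
- move=> n v; refine (main_abs (T := Y omega 0) (S := fun w => Y h (-1) w) _ _ _ _ _ _ n v).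
  + exact: YL.
  + exact: YL.
  + move=> i a x y /=; case: (i == 0%N); first by rewrite scaler0 addr0.
    exact: lin_scale.
  + by [].
  + move=> i w /=; case: eqP => [_|Hi]; first by rewrite (lin0 (YL _ _)).
    rewrite (linZ (YL _ _)) (comm_hh HV hh) //; lia.
  + move=> m w; rewrite /psi; case: m => [|m] /=.
      by rewrite (lin0 (YL _ _)) !subr0 scale1r invr1 scale1r.
    rewrite (linZ (YL _ _)) -(scalerBr ((m.+1%:R)^-1) (Y omega 0 (Y h (- m.+1%:Z) w))) (comm_om HV hL).
    have -> : (0 + - (m.+1)%:Z - 1) = - (m.+2)%:Z by lia.
    rewrite !scalerA; apply/eqP; rewrite subr_eq0; apply/eqP; congr (_ *: _).
    field.
    by rewrite nat1r -natrD !pnatr_eq0.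
Qed.
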